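(* Let $\lambda>0$ and $S\in(0,\lambda]$ be a given spot price. For a company $j$ with parameters $\pi^0_j,\pi^1_j,\gamma_j>0$, $\mathrm{E}^{\mathrm{bau}}_j=\pi^0_j/\pi^1_j$, $\varrho_j=1/\pi^1_j+1/\gamma_j$ and $\lambda\varrho_j<\mathrm{E}^{\mathrm{bau}}_j$: (1) If company $c$ purchases certificates directly at the auction, its optimal demand is $\bm{\delta_c}(\bm{P_c}(S))=\bm{\delta_c}(S)=\mathrm{E}^{\mathrm{bau}}_c-S\varrho_c$. (2) If company $b$ purchases certificates through a financial intermediary, the intermediated price is $\bm{P_b}(S)=\tfrac12\big(S+\mathrm{E}^{\mathrm{bau}}_b/\varrho_b\big)\wedge\lambda$ and the resulting demand is $\bm{\delta_b}(\bm{P_b}(S))=\tfrac12(\mathrm{E}^{\mathrm{bau}}_b-S\varrho_b)\vee(\mathrm{E}^{\mathrm{bau}}_b-\lambda\varrho_b)$.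
   Context: Company $j$ facing certificate price $P$ maximizes $\pi^0_jq-\tfrac{\pi^1_j}2q^2-\tfrac{\gamma_j}2[(1-e^{-a})q]^2-\delta P-\lambda(e^{-a}q-\delta)^+$ over $(q,a,\delta)$; its optimal demand is $\bm{\delta_j}(P)=\mathrm{E}^{\mathrm{bau}}_j-P\varrho_j$. A company buying directly faces $\bm{P_c}(S)=S$. An intermediary buying at spot price $S$ sets the price $\bm{P_b}(S)$ maximizing its wealth $\bm{\delta_b}(P)(P-S)$ over the admissible interval $P\in[S,\lambda]$. $x\wedge y=\min(x,y)$, $x\vee y=\max(x,y)$. *)

(* Defs.v *)
From Stdlib Require Import Reals Lra.
Open Scope R_scope.

Definition Ebau (pi0 pi1 : R) : R := pi0 / pi1.
Definition rho (pi1 gam : R) : R := / pi1 + / gam.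

Definition demand (pi0 pi1 gam P : R) : R := Ebau pi0 pi1 - P * rho pi1 gam.

Definition objective (pi0 pi1 gam lam P q a d : R) : R :=
  pi0 * q - pi1 / 2 * q ^ 2 - gam / 2 * ((1 - exp (- a)) * q) ^ 2
  - d * P - lam * Rmax (exp (- a) * q - d) 0.

Definition is_optimal_demand (pi0 pi1 gam lam P d : R) : Prop :=
  exists q a : R, forall q' a' d' : R,
    objective pi0 pi1 gam lam P q' a' d' <= objective pi0 pi1 gam lam P q a d.

Definition Pc (S : R) : R := S.

Definition intermediary_wealth (pi0 pi1 gam S P : R) : R :=
  demand pi0 pi1 gam P * (P - S).

Definition is_intermediated_price (pi0 pi1 gam lam S P : R) : Prop :=
  S <= P <= lam /\
  forall P', S <= P' <= lam ->
    intermediary_wealth pi0 pi1 gam S P' <= intermediary_wealth pi0 pi1 gam S P.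

(* Main.v *)
Require Import Defs.
From Stdlib Require Import Reals Lra Psatz.
Open Scope R_scope.

Lemma opt_lemma (pi0 pi1 gam lam P : R) :
  0 < pi0 -> 0 < pi1 -> 0 < gam -> 0 <= P <= lam ->
  P * rho pi1 gam < Ebau pi0 pi1 ->
  is_optimal_demand pi0 pi1 gam lam P (demand pi0 pi1 gam P).
Proof.
  intros H0 H1 Hg HP He.
  set (qs := (pi0 - P) / pi1).
  set (xs := P / gam).
  assert (Eq : pi1 * qs = pi0 - P) by (unfold qs; field; lra).
  assert (Ex : gam * xs = P) by (unfold xs; field; lra).
  assert (Ed : demand pi0 pi1 gam P = qs - xs).
  { unfold demand, Ebau, rho, qs, xs. field. split; lra. }
  assert (Hd : 0 < qs - xs) by (rewrite <- Ed; unfold demand; lra).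
  assert (Hxs : 0 <= xs) by (unfold xs; apply Rmult_le_pos; [lra| left; apply Rinv_0_lt_compat; lra]).
  assert (Hqs : 0 < qs) by lra.
  exists qs, (- ln ((qs - xs) / qs)).
  intros q' a' d'.
  rewrite Ed.
  unfold objective. rewrite Ropp_involutive, exp_ln by (apply Rdiv_lt_0_compat; lra).

  replace ((qs - xs) / qs * qs - (qs - xs)) with 0 by (field; lra).
  replace ((1 - (qs - xs) / qs) * qs) with xs by (field; lra).
  rewrite (Rmax_right 0 0) by lra.
  set (x' := (1 - exp (- a')) * q').
  assert (Hb : - d' * P - lam * Rmax (exp (- a') * q' - d') 0 <= - P * (q' - x')).
  { unfold x'. unfold Rmax. destruct (Rle_dec (exp (- a') * q' - d') 0); nra. }
  assert (Hq : pi0 * q' - pi1 / 2 * q' ^ 2 - gam / 2 * x' ^ 2 - P * (q' - x')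
     <= pi0 * qs - pi1 / 2 * qs ^ 2 - gam / 2 * xs ^ 2 - (qs - xs) * P).
  { replace pi0 with (pi1 * qs + P) by lra. rewrite <- Ex.
    assert (0 <= pi1 * (q' - qs) ^ 2) by (apply Rmult_le_pos; [lra| apply pow2_ge_0]).
    assert (0 <= gam * (x' - xs) ^ 2) by (apply Rmult_le_pos; [lra| apply pow2_ge_0]).
    match goal with |- ?a <= ?b => assert (b - a = pi1 / 2 * (q' - qs) ^ 2 + gam / 2 * (x' - xs) ^ 2) end; [idtac|]. field.
    lra. }
  lra.
Qed.

Theorem propositionA1 (lam S pi0c pi1c gamc pi0b pi1b gamb : R) :
  0 < lam -> 0 < S <= lam ->
  0 < pi0c -> 0 < pi1c -> 0 < gamc -> lam * rho pi1c gamc < Ebau pi0c pi1c ->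
  0 < pi0b -> 0 < pi1b -> 0 < gamb -> lam * rho pi1b gamb < Ebau pi0b pi1b ->
  (* (1) direct purchase *)
  (is_optimal_demand pi0c pi1c gamc lam (Pc S) (demand pi0c pi1c gamc (Pc S)) /\
   demand pi0c pi1c gamc (Pc S) = demand pi0c pi1c gamc S /\
   demand pi0c pi1c gamc S = Ebau pi0c pi1c - S * rho pi1c gamc) /\
  (* (2) purchase through an intermediary *)
  (forall P, is_intermediated_price pi0b pi1b gamb lam S P <->
     P = Rmin ((S + Ebau pi0b pi1b / rho pi1b gamb) / 2) lam) /\
  is_optimal_demand pi0b pi1b gamb lam
     (Rmin ((S + Ebau pi0b pi1b / rho pi1b gamb) / 2) lam)
     (demand pi0b pi1b gamb (Rmin ((S + Ebau pi0b pi1b / rho pi1b gamb) / 2) lam)) /\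
  demand pi0b pi1b gamb (Rmin ((S + Ebau pi0b pi1b / rho pi1b gamb) / 2) lam) =
     Rmax ((Ebau pi0b pi1b - S * rho pi1b gamb) / 2) (Ebau pi0b pi1b - lam * rho pi1b gamb).
Proof.
  intros Hl HS H0c H1c Hgc Hc H0b H1b Hgb Hb.
  assert (Hrc : 0 < rho pi1c gamc).
  { unfold rho. assert (0 < / pi1c) by (apply Rinv_0_lt_compat; lra).
    assert (0 < / gamc) by (apply Rinv_0_lt_compat; lra). lra. }
  assert (Hrb : 0 < rho pi1b gamb).
  { unfold rho. assert (0 < / pi1b) by (apply Rinv_0_lt_compat; lra).
    assert (0 < / gamb) by (apply Rinv_0_lt_compat; lra). lra. }
  split; [split; [|split]|].
  - unfold Pc. apply opt_lemma; try lra. nra.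
  - reflexivity.
  - reflexivity.
  - set (r := rho pi1b gamb) in *. set (E := Ebau pi0b pi1b) in *.
    set (P0 := (S + E / r) / 2).
    assert (EP0 : P0 * r = (S * r + E) / 2) by (unfold P0; field; lra).
    assert (HP0 : S < P0) by nra.
    assert (Hw : forall P, intermediary_wealth pi0b pi1b gamb S P
                 = (E - P0 * r) * (P0 - S) - r * (P - P0) ^ 2).
    { intro P. unfold intermediary_wealth, demand. fold r E.
      replace E with (2 * (P0 * r) - S * r) by lra. field. }
    assert (HPm : S <= Rmin P0 lam <= lam).
    { unfold Rmin; destruct (Rle_dec P0 lam); lra. }
    split; [|split].
    + intro P. unfold is_intermediated_price. split.
      * intros [HPi Hmax]. specialize (Hmax (Rmin P0 lam) HPm).
        rewrite !Hw in Hmax.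
        assert (Hsq : (P - P0) ^ 2 <= (Rmin P0 lam - P0) ^ 2).
        { apply Rmult_le_reg_l with r; lra. }
        unfold Rmin in *; destruct (Rle_dec P0 lam); apply Rle_antisym; nra.
      * intros ->. split; [exact HPm|]. intros P' HP'. rewrite !Hw.
        assert (Hsq : (Rmin P0 lam - P0) ^ 2 <= (P' - P0) ^ 2).
        { unfold Rmin in *; destruct (Rle_dec P0 lam).
          - replace (P0 - P0) with 0 by lra. replace (0 ^ 2) with 0 by (simpl; lra). apply pow2_ge_0.
          - simpl. assert (0 <= P0 - lam) by lra. assert (P0 - lam <= P0 - P') by lra.
            nra. }
        assert (r * (Rmin P0 lam - P0) ^ 2 <= r * (P' - P0) ^ 2)
          by (apply Rmult_le_compat_l; lra).
        lra.
    + apply opt_lemma; try lra. fold r E. nra.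
    + unfold demand. fold r E.
      unfold Rmin, Rmax; destruct (Rle_dec P0 lam);
        destruct (Rle_dec ((E - S * r) / 2) (E - lam * r)); nra.
Qed.
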